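(* Let $A$ be a finite nonempty subset of an abelian group. Suppose $\mathsf E(A)=|A|^3/K$ and $\mathsf E_3(A)=M|A|^4/K^2$. Then there exists $A'\subseteq A$ with $|A'|\ge c|A|/M$ and $|A'-A'|\le CM^6K^4|A'|$, where $c,C>0$ are absolute constants.
   Context: $(A\circ A)(x)=|\{(a,b)\in A^2:b-a=x\}|$, $\mathsf E_k(A)=\sum_x(A\circ A)(x)^k$, $\mathsf E(A)=\mathsf E_2(A)$. *)

(* Defs.v *)
From HB Require Import structures.
From mathcomp Require Import all_boot all_order all_algebra.
From mathcomp Require Import finmap.
Set Implicit Arguments. Unset Strict Implicit. Unset Printing Implicit Defensive.
Import Order.TTheory GRing.Theory Num.Theory.
Local Open Scope fset_scope.

Definition diffset (G : zmodType) (A : {fset G}) : {fset G} :=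
  [fset (x - y)%R | x in A, y in A].

Definition rep (G : zmodType) (A : {fset G}) (x : G) : nat :=
  #|` [fset p in A `*` A | (p.2 - p.1)%R == x] |.

(* E_k(A) = sum_x (A o A)(x)^k ; the sum over x in A - A is the full sum,
   since (A o A)(x) = 0 outside A - A. *)
Definition energyk (k : nat) (G : zmodType) (A : {fset G}) : nat :=
  (\sum_(x <- diffset A) rep A x ^ k)%N.

Definition energy (G : zmodType) (A : {fset G}) : nat := energyk 2 A.

(* Main.v *)
Require Import Defs.
From HB Require Import structures.
From mathcomp Require Import all_boot all_order all_algebra.
From mathcomp Require Import finmap.
From mathcomp Require Import ring lra.
Import Order.TTheory GRing.Theory Num.Theory.
Local Open Scope fset_scope.
Local Open Scope ring_scope.

Local Open Scope ring_scope.

Lemma L_ind (T : eqType) (s : seq T) (t : T) (F : T -> rat) :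
  uniq s -> \sum_(x <- s) (x == t)%:R * F x = (t \in s)%:R * F t.
Proof.
elim: s => [|y s IH] /=; first by rewrite big_nil mul0r.
case/andP => ys us; rewrite big_cons IH // in_cons.
case: eqP => [e|ne]; last by rewrite mul0r add0r; case: eqP => // e; case: ne.
by subst y; rewrite eqxx (negbTE ys) mul0r addr0.
Qed.

Lemma L_ind_le (T : eqType) (s : seq T) (t : T) (F : T -> rat) :
  uniq s -> 0 <= F t -> \sum_(x <- s) (x == t)%:R * F x <= F t.
Proof.
move=> us F0; rewrite L_ind //; case: (t \in s); rewrite ?mul1r ?mul0r //.
Qed.

Lemma sumM (K K': choiceType) (A : {fset K}) (B : {fset K'}) (F : K * K' -> nat) :
  (\sum_(p <- A `*` B) F p = \sum_(a <- A) \sum_(b <- B) F (a, b))%N.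
Proof.
rewrite /fsetM big_imfset2 //=; last by move=> [??] [??] _ _ /= [-> ->].
Qed.

Lemma repE (G : zmodType) (A : {fset G}) x :
  (rep A x)%:R = \sum_(u <- A) \sum_(v <- A) ((v - u == x)%:R : rat).
Proof.
rewrite /rep card_fset_sum1 -big_fset_condE big_mkcond /= sumM natr_sum.
apply: eq_bigr => u _; rewrite natr_sum; apply: eq_bigr => v _ /=.
by case: (v - u == x).
Qed.

Lemma in_diffset (G : zmodType) (A : {fset G}) u v :
  u \in A -> v \in A -> v - u \in diffset A.
Proof. by move=> uA vA; apply/imfset2P; exists v => //; exists u. Qed.

Lemma diffsetP (G : zmodType) (A : {fset G}) x :
  x \in diffset A -> exists2 a, a \in A & exists2 b, b \in A & x = a - b.
Proof. by case/imfset2P => a aA [b bA ->]; exists a => //; exists b. Qed.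

Lemma rep_out (G : zmodType) (A : {fset G}) x :
  x \notin diffset A -> ((rep A x)%:R : rat) = 0.
Proof.
move=> xn; rewrite repE big1_fset // => u uA _; rewrite big1_fset // => v vA _.
by case: eqP => // e; move: xn; rewrite -e in_diffset.
Qed.

Lemma sum_diffset (G : zmodType) (A : {fset G}) (g : G -> rat) :
  \sum_(x <- diffset A) (rep A x)%:R * g x = \sum_(u <- A) \sum_(v <- A) g (v - u).
Proof.
under eq_bigr do rewrite repE big_distrl /=.
rewrite exchange_big /=; apply: eq_big_seq => u uA.
under eq_bigr do rewrite big_distrl /=.
rewrite exchange_big /=; apply: eq_big_seq => v vA.
rewrite (eq_bigr (fun x => (x == v - u)%:R * g x)); last by move=> x _; rewrite eq_sym.
rewrite L_ind ?fset_uniq //.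
by rewrite in_diffset // mul1r.
Qed.
Lemma eq_sub_swap (G : zmodType) (y p w : G) : (y == p - w) = (w == p - y).
Proof. by apply/eqP/eqP => ->; rewrite opprB addrC subrK. Qed.

Lemma expand_supp (T : eqType) (Y : seq T) (f : T -> rat) t :
  uniq Y -> (forall t, t \notin Y -> f t = 0) ->
  f t = \sum_(y <- Y) (y == t)%:R * f y.
Proof.
move=> uY fz; rewrite L_ind //; case: (boolP (t \in Y)) => tY; first by rewrite mul1r.
by rewrite mul0r fz.
Qed.

Lemma ind_pair_le (G : zmodType) (S : seq G) (y1 y2 p q : G) : uniq S ->
  \sum_(w <- S) ((y1 == p - w)%:R * (y2 == q - w)%:R : rat) <= (y1 - y2 == p - q)%:R.
Proof.
move=> uS; case: (boolP (y1 - y2 == p - q)) => e.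
  apply: (le_trans (y := \sum_(w <- S) (w == p - y1)%:R * (1 : rat))).
    apply: ler_sum => w _; rewrite eq_sub_swap mulr1.
    by case: (w == _); case: (y2 == _); rewrite ?mulr1 ?mulr0 ?mul0r.
  by apply: L_ind_le.
rewrite big1 // => w _; case: eqP => [e1|]; last by rewrite mul0r.
case: eqP => [e2|]; last by rewrite mulr0.
by move: e; rewrite e1 e2 opprB addrA subrK eqxx.
Qed.

Lemma conv_le (G : zmodType) (S Y : seq G) (f g : G -> rat) p q :
  uniq S -> uniq Y -> (forall y, 0 <= f y) -> (forall y, 0 <= g y) ->
  (forall t, t \notin Y -> f t = 0) -> (forall t, t \notin Y -> g t = 0) ->
  \sum_(w <- S) f (p - w) * g (q - w) <=
  \sum_(y1 <- Y) \sum_(y2 <- Y) f y1 * g y2 * (y1 - y2 == p - q)%:R.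
Proof.
move=> uS uY f0 g0 fz gz.
under eq_bigr => w _ do rewrite (@expand_supp _ Y f (p - w) uY fz) (@expand_supp _ Y g (q - w) uY gz) big_distrlr /=.
rewrite exchange_big /=; apply: ler_sum => y1 _.
rewrite exchange_big /=; apply: ler_sum => y2 _.
apply: (le_trans (y := f y1 * g y2 * \sum_(w <- S) ((y1 == p - w)%:R * (y2 == q - w)%:R))).
  rewrite big_distrr /=; apply: ler_sum => w _.
  by rewrite le_eqVlt; apply/orP; left; apply/eqP; ring.
by apply: ler_wpM2l; [apply: mulr_ge0 | apply: ind_pair_le].
Qed.
Lemma lerX (x y : rat) n : 0 <= x -> x <= y -> x^+n <= y^+n.
Proof. move=> x0 xy; apply: lerXn2r => //; rewrite qualifE /=; exact: le_trans x0 xy. Qed.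

Lemma final_alg (N E E3 D d Dpp App : rat) :
 0 < N -> 0 < E -> 0 < E3 -> 0 < D -> 0 < d -> 0 <= Dpp ->
 E^+2 <= 4*E3*D -> D <= 2*N*d -> 3*d <= 4*App ->
 Dpp * ((E/(2*N^+2))^+4 * (D^+2/(48*N^+3))^+2 * d) <= 3 * N^+8 ->
 let K := N^+3/E in let M := E3 * K^+2 / N^+4 in
 3/32 * N / M <= App /\ Dpp <= 2^+32 * M^+6 * K^+4 * App.
Proof.
move=> N0 E0 E30 D0 d0 Dp0 hE hD hd h1 K M.
have N0' : N != 0 by rewrite gt_eqF.
have E0' : E != 0 by rewrite gt_eqF.
have E30' : E3 != 0 by rewrite gt_eqF.
have -> : M = E3 * N^+2 / E^+2 by rewrite /M /K; field; rewrite ?N0' ?E0' ?E30'.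
have -> : K = N^+3 / E by [].
split.
  have -> : 3 / 32 * N / (E3 * N ^+ 2 / E ^+ 2) = 3 * E^+2 / (32 * N * E3) by field; rewrite ?N0' ?E0' ?E30'.
  rewrite ler_pdivrMr; last by rewrite !mulr_gt0.
  have a1 : E3 * D <= E3 * (2 * N * d) by apply: ler_wpM2l; [exact: ltW|].
  have a2 : (E3 * N) * (24 * d) <= (E3 * N) * (32 * App) by apply: ler_wpM2l; [rewrite mulr_ge0 // ltW | lra].
  have -> : App * (32 * N * E3) = (E3 * N) * (32 * App) by ring.
  have e2 : 12 * (E3 * (2 * N * d)) = (E3 * N) * (24 * d) by ring.
  lra.
have h1' : Dpp * E^+4 * D^+4 * d <= (2^+12 * 27) * N^+22.
  have e : Dpp * ((E/(2*N^+2))^+4 * (D^+2/(48*N^+3))^+2 * d) = (Dpp * E^+4 * D^+4 * d) / ((2^+12*9) * N^+14) by field; rewrite ?N0' ?E0' ?E30'.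
  move: h1; rewrite e ler_pdivrMr; last by rewrite !mulr_gt0 ?exprn_gt0 ?ltr0n.
  have -> : 3 * N ^+ 8 * ((2^+12*9) * N ^+ 14) = (2^+12 * 27) * N^+22 by ring.
  by [].
have -> : 2 ^+ 32 * (E3 * N ^+ 2 / E ^+ 2) ^+ 6 * (N ^+ 3 / E) ^+ 4 * App = (2^+32 * E3^+6 * N^+24 * App) / E^+16 by field; rewrite ?N0' ?E0' ?E30'.
rewrite ler_pdivlMr; last by rewrite exprn_gt0.
have hE12 : E^+12 <= 2^+12 * E3^+6 * D^+6.
  have h := @lerX _ _ 6 (ltW (exprn_gt0 2 E0)) hE.
  apply: (le_trans (y := (E ^+ 2) ^+ 6)); first by rewrite -exprM.
  apply: (le_trans h); rewrite le_eqVlt; apply/orP; left; apply/eqP; ring.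
have hD2 : D^+2 <= 4 * N^+2 * d^+2.
  have h := @lerX _ _ 2 (ltW D0) hD.
  apply: (le_trans h); rewrite le_eqVlt; apply/orP; left; apply/eqP; ring.
have p1 : 0 <= Dpp * E^+4 by rewrite mulr_ge0 // exprn_ge0 // ltW.
have p2 : 0 <= Dpp * E^+4 * D^+4 by rewrite mulr_ge0 // exprn_ge0 // ltW.
have s1 : Dpp * E^+16 <= 2^+12 * E3^+6 * (Dpp * E^+4 * D^+6).
  have -> : Dpp * E^+16 = (Dpp * E^+4) * E^+12 by ring.
  have -> : 2^+12 * E3^+6 * (Dpp * E^+4 * D^+6) = (Dpp * E^+4) * (2^+12 * E3^+6 * D^+6) by ring.
  by apply: ler_wpM2l.
have s2 : Dpp * E^+4 * D^+6 <= 4 * N^+2 * d * ((2^+12 * 27) * N^+22).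
  have -> : Dpp * E^+4 * D^+6 = (Dpp * E^+4 * D^+4) * D^+2 by ring.
  apply: (le_trans (y := (Dpp * E^+4 * D^+4) * (4 * N^+2 * d^+2))).
    by apply: ler_wpM2l.
  have -> : Dpp * E^+4 * D^+4 * (4 * N^+2 * d^+2) = (4 * N^+2 * d) * (Dpp * E^+4 * D^+4 * d) by ring.
  apply: ler_wpM2l => //.
  by rewrite !mulr_ge0 ?ler0n ?exprn_ge0 ?ltW.
apply: (le_trans s1).
apply: (le_trans (y := 2^+12 * E3^+6 * (4 * N^+2 * d * ((2^+12 * 27) * N^+22)))).
  apply: ler_wpM2l; last exact: s2.
  by rewrite mulr_ge0 ?exprn_ge0 ?ler0n ?ltW.
apply: (le_trans (y := (E3^+6 * N^+24) * ((2^+26*27) * d))).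
  by rewrite le_eqVlt; apply/orP; left; apply/eqP; ring.
apply: (le_trans (y := (E3^+6 * N^+24) * (2^+32 * App))).
  apply: ler_wpM2l; first by rewrite mulr_ge0 ?exprn_ge0 ?ltW.
  lra.
by rewrite le_eqVlt; apply/orP; left; apply/eqP; ring.
Qed.

Lemma sum_ge_term (T : eqType) (s : seq T) (F : T -> rat) x :
  uniq s -> (forall y, 0 <= F y) -> x \in s -> F x <= \sum_(y <- s) F y.
Proof.
move=> us F0 xs; have := @L_ind _ s x F us; rewrite xs mul1r => <-.
by apply: ler_sum => y _; case: (y == x); rewrite ?mul1r ?mul0r.
Qed.

Lemma sum_eq_le1 (T : eqType) (s : seq T) (t : T) :
  uniq s -> \sum_(x <- s) ((t == x)%:R : rat) <= 1.
Proof.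
move=> us; have := @L_ind_le _ s t (fun _ => (1:rat)) us ler01.
by under eq_bigr do rewrite mulr1 eq_sym.
Qed.

Lemma card_sep (T : choiceType) (A : {fset T}) (P : pred T) :
  ((#|` [fset a in A | P a]|)%:R : rat) = \sum_(a <- A) (P a)%:R.
Proof.
rewrite card_fset_sum1 -big_fset_condE big_mkcond natr_sum /=.
by apply: eq_bigr => a _; case: (P a).
Qed.

Lemma ler_sum_in (T : eqType) (s : seq T) (F H : T -> rat) :
  (forall x, x \in s -> F x <= H x) -> \sum_(x <- s) F x <= \sum_(x <- s) H x.
Proof. by move=> h; rewrite big_seq [X in _ <= X]big_seq; apply: ler_sum => x; exact: h. Qed.

Lemma ind_split (p x y : bool) :
  (p%:R : rat) <= p%:R * x%:R * y%:R + p%:R * (~~ x)%:R + p%:R * (~~ y)%:R.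
Proof. by case: p; case: x; case: y; rewrite /= ?mul1r ?mul0r ?mulr1 ?mulr0 ?add0r ?addr0 ?lerDl ?ler01. Qed.

Lemma ptw (t m ca cb : rat) (p : bool) : 0 <= t -> 0 <= m -> 0 <= ca -> 0 <= cb ->
  t^+4 * m^+2 * (p%:R * (m <= ca)%R%:R * (m <= cb)%R%:R) <= (t^+2 * ca) * (t^+2 * cb).
Proof.
move=> t0 m0 a0 b0.
have t2 : 0 <= t ^+ 2 by rewrite exprn_ge0.
case: p; case: (boolP (m <= ca)) => ha; case: (boolP (m <= cb)) => hb;
  rewrite /= ?mulr0 ?mul0r ?mulr1 ?mul1r; try (by rewrite !mulr_ge0).
have -> : t ^+ 4 * m ^+ 2 = (t ^+ 2 * m) * (t ^+ 2 * m) by ring.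
by apply: ler_pM; rewrite ?mulr_ge0 // ler_wpM2l.
Qed.
Theorem corollary52 :
  exists c C : rat, 0 < c /\ 0 < C /\
    forall (G : zmodType) (A : {fset G}), A != fset0 ->
      let N : rat := (#|` A|)%:R in
      let K : rat := N ^+ 3 / (energy A)%:R in
      let M : rat := (energyk 3 A)%:R * K ^+ 2 / N ^+ 4 in
      exists A' : {fset G}, A' `<=` A /\
        c * N / M <= (#|` A'|)%:R /\
        (#|` diffset A'|)%:R <= C * M ^+ 6 * K ^+ 4 * (#|` A'|)%:R.
Proof.
exists (3/32), (2^+32); split; first by apply: divr_gt0; apply: ltr0Sn.
split; first by rewrite exprn_gt0.
move=> G A A0 N K M.
pose r := fun x : G => ((rep A x)%:R : rat).
have r0 : forall x, 0 <= r x by move=> x; rewrite /r ler0n.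
have rz : forall t, t \notin diffset A -> r t = 0 by move=> t; exact: rep_out.
have uA := fset_uniq A.
have uD := fset_uniq (diffset A).
have NE : N = \sum_(u <- A) 1 by rewrite /N card_fset_sum1 natr_sum.
have sumc : forall c : rat, \sum_(u <- A) c = c * N.
  by move=> c; rewrite NE mulr_sumr; apply: eq_bigr => *; rewrite mulr1.
have N0 : 0 < N by rewrite /N ltr0n cardfs_gt0.
have EE : (energy A)%:R = \sum_(u <- A) \sum_(v <- A) r (v - u).
  rewrite /energy /energyk natr_sum -(@sum_diffset G A r); apply: eq_bigr => x _.
  by rewrite natrX expr2.
have E3E : (energyk 3 A)%:R = \sum_(u <- A) \sum_(v <- A) r (v - u) ^+ 2.
  rewrite /energyk natr_sum -(@sum_diffset G A (fun x => r x ^+ 2)); apply: eq_bigr => x _.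
  by rewrite natrX exprS.
set E := (energy A)%:R in EE K M *.
set E3 := (energyk 3 A)%:R in E3E M *.
have rge1 : forall u v, u \in A -> v \in A -> 1 <= r (v - u).
  move=> u v uA' vA'; rewrite /r repE.
  apply: (le_trans _ (@sum_ge_term _ A (fun u' => \sum_(v' <- A) ((v' - u' == v - u)%:R : rat)) u uA _ uA')); last first.
    by move=> y; apply: sumr_ge0 => *; apply: ler0n.
  apply: (le_trans _ (@sum_ge_term _ A (fun v' => ((v' - u == v - u)%:R : rat)) v uA _ vA')); last by move=> y; apply: ler0n.
  by rewrite eqxx.
have NN : \sum_(u <- A) \sum_(v <- A) (1 : rat) = N ^+ 2.
  by rewrite (eq_bigr (fun _ => 1 * N)) ?sumc ?mul1r ?expr2 // => u _; rewrite sumc.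
have EN : N ^+ 2 <= E.
  rewrite EE -NN; apply: ler_sum_in => u uA'; apply: ler_sum_in => v vA'.
  exact: rge1.
have E3N : N ^+ 2 <= E3.
  rewrite E3E -NN; apply: ler_sum_in => u uA'; apply: ler_sum_in => v vA'.
  by rewrite -(expr1n _ 2); apply: lerX => //; exact: rge1.
have E0 : 0 < E by apply: lt_le_trans EN; rewrite exprn_gt0.
have E30 : 0 < E3 by apply: lt_le_trans E3N; rewrite exprn_gt0.
pose tau := E / (2 * N ^+ 2).
have tau0 : 0 < tau by rewrite divr_gt0 // mulr_gt0 // exprn_gt0.
pose pop := fun y : G => tau <= r y.
pose ind := fun b : bool => (b%:R : rat).
have ind0 : forall b, 0 <= ind b by move=> b; rewrite /ind ler0n.
have ind1 : forall b, ind b <= 1 by move=> [] ; rewrite /ind.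
pose D := \sum_(w <- A) \sum_(a <- A) ind (pop (a - w)).
pose S1 := \sum_(w <- A) \sum_(a <- A) ind (pop (a - w)) * r (a - w).
have F1 : E <= 2 * S1.
  have h : E <= S1 + tau * N ^+ 2.
    rewrite EE -NN mulr_sumr -big_split /=; apply: ler_sum => u _.
    rewrite mulr_sumr -big_split /=; apply: ler_sum => v _.
    rewrite mulr1 /ind /pop; case: (boolP (tau <= r (v - u))) => h.
      by rewrite mul1r lerDl ltW.
    by rewrite mul0r add0r ltW // ltNge.
  have e : tau * N ^+ 2 = E / 2 by rewrite /tau; field; rewrite gt_eqF.
  lra.
have F2 : E ^+ 2 <= 4 * E3 * D.
  have h : 4 * E3 * E * S1 <= 4 * E3 ^+ 2 * D + E ^+ 2 * E3.
    rewrite [in X in _ <= _ + X]E3E /S1 /D !mulr_sumr -big_split /=; apply: ler_sum => u _.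
    rewrite !mulr_sumr -big_split /=; apply: ler_sum => v _.
    rewrite /ind /pop; case: (tau <= r (v - u)) => /=.
      rewrite !mul1r mulr1; have := sqr_ge0 (2 * E3 - E * r (v - u)); nra.
    rewrite !mul0r !mulr0 ?add0r; apply: mulr_ge0; apply: exprn_ge0; [exact: ltW | exact: r0].
  have h2 : 2 * E3 * E ^+ 2 <= 4 * E3 * E * S1.
    have -> : 2 * E3 * E ^+ 2 = (2 * E3 * E) * E by ring.
    have -> : 4 * E3 * E * S1 = (2 * E3 * E) * (2 * S1) by ring.
    by apply: ler_wpM2l => //; rewrite !mulr_ge0 // ltW.
  have h3 : E3 * E ^+ 2 <= E3 * (4 * E3 * D).
    have -> : E3 * (4 * E3 * D) = 4 * E3 ^+ 2 * D by ring.
    lra.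
  by rewrite ler_pM2l in h3.
have D0 : 0 < D.
  have : 0 < E ^+ 2 by rewrite exprn_gt0.
  move=> h; have : 0 < 4 * E3 * D by apply: lt_le_trans h F2.
  by rewrite pmulr_rgt0 // mulr_gt0.
pose deg := fun w : G => \sum_(a <- A) ind (pop (a - w)).
have deg0 : forall w, 0 <= deg w by move=> w; apply: sumr_ge0 => *.
have DE : D = \sum_(w <- A) deg w by [].
pose cod := fun a b : G => \sum_(w <- A) ind (pop (a - w)) * ind (pop (b - w)).
have cod0 : forall a b, 0 <= cod a b by move=> a b; apply: sumr_ge0 => *; rewrite mulr_ge0.
have F4 : \sum_(w <- A) deg w ^+ 2 = \sum_(a <- A) \sum_(b <- A) cod a b.
  under eq_bigr do rewrite expr2 /deg big_distrlr /=.
  rewrite exchange_big /=; apply: eq_bigr => a _.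
  by rewrite exchange_big.
pose big := fun w : G => D <= 2 * N * deg w.
have F5 : D ^+ 2 <= 2 * N * \sum_(w <- A) ind (big w) * deg w ^+ 2.
  have h : \sum_(w <- A) (3 * N * D * deg w - 2 * D ^+ 2) <= \sum_(w <- A) 2 * N ^+ 2 * (ind (big w) * deg w ^+ 2).
    apply: ler_sum => w _; rewrite /ind /big; have := deg0 w.
    case: (boolP (D <= 2 * N * deg w)) => hb /= dg.
      rewrite mul1r; have := sqr_ge0 (4 * N * deg w - 3 * D); nra.
    rewrite mul0r mulr0; rewrite -ltNge in hb.
    have : N * deg w * D <= D * D / 2.
      have : N * deg w < D / 2 by lra.
      move=> h; have := ltW h; move=> h'; have := ler_wpM2r (ltW D0) h'; lra.
    nra.
  move: h; rewrite sumrB -(mulr_sumr _ _ _ (3 * N * D)) -DE sumc -(mulr_sumr _ _ _ (2 * N ^+ 2)).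
  set Sg := \sum_(w <- A) ind (big w) * deg w ^+ 2 => h.
  have h2 : N * D ^+ 2 <= N * (2 * N * Sg).
    have -> : N * (2 * N * Sg) = 2 * N ^+ 2 * Sg by ring.
    have e : 3 * N * D * D - 2 * D ^+ 2 * N = N * D ^+ 2 by ring.
    lra.
  by rewrite ler_pM2l in h2.
pose m := D ^+ 2 / (48 * N ^+ 3).
have m0 : 0 <= m by rewrite /m divr_ge0 ?exprn_ge0 ?mulr_ge0 ?ler0n // ltW.
pose bad := fun w : G => \sum_(a <- A) \sum_(b <- A) ind (pop (a - w)) * ind (pop (b - w)) * ind (cod a b < m).
have bad0 : forall w, 0 <= bad w.
  by move=> w; apply: sumr_ge0 => a _; apply: sumr_ge0 => b _; rewrite !mulr_ge0.
have F6 : \sum_(w <- A) bad w <= m * N ^+ 2.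
  have e : \sum_(w <- A) bad w = \sum_(a <- A) \sum_(b <- A) ind (cod a b < m) * cod a b.
    rewrite /bad exchange_big /=; apply: eq_bigr => a _.
    rewrite exchange_big /=; apply: eq_bigr => b _.
    by rewrite /cod mulr_sumr; apply: eq_bigr => w' _; rewrite mulrC.
  rewrite e -NN mulr_sumr; apply: ler_sum => a _; rewrite mulr_sumr; apply: ler_sum => b _.
  rewrite mulr1 /ind; case: (boolP (cod a b < m)) => h /=; first by rewrite mul1r ltW.
  by rewrite mul0r.
have F7 : has (fun w => big w && (12 * bad w < deg w ^+ 2)) A.
  apply/negPn/negP => /hasPn H.
  have h1 : \sum_(w <- A) ind (big w) * deg w ^+ 2 <= \sum_(w <- A) 12 * bad w.
    apply: ler_sum_in => w wA; have := H w wA; rewrite negb_and /ind.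
    case: (big w) => /=; last by rewrite mul0r mulr_ge0 ?ler0n.
    by rewrite mul1r -leNgt.
  have h2 : D ^+ 2 <= 2 * N * (12 * (m * N ^+ 2)).
    apply: (le_trans F5); apply: ler_wpM2l; first by rewrite mulr_ge0 ?ler0n // ltW.
    apply: (le_trans h1); rewrite -mulr_sumr; apply: ler_wpM2l; first by rewrite ler0n.
    exact: F6.
  have e : 2 * N * (12 * (m * N ^+ 2)) = D ^+ 2 / 2.
    by rewrite /m; field; rewrite gt_eqF.
  have : 0 < D ^+ 2 by rewrite exprn_gt0.
  lra.
case/hasP: F7 => w wA /andP [hbig hbad].
pose d := deg w.
have d0 : 0 < d.
  have : 0 < 2 * N * d by apply: lt_le_trans D0 hbig.
  move=> h; nra.
pose bd := fun a : G => \sum_(b <- A) ind (pop (b - w)) * ind (cod a b < m).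
have bd0 : forall a, 0 <= bd a by move=> a; apply: sumr_ge0 => b _; rewrite mulr_ge0.
have F8 : \sum_(a <- A) ind (pop (a - w)) * bd a = bad w.
  rewrite /bad; apply: eq_bigr => a _; rewrite /bd mulr_sumr; apply: eq_bigr => b _.
  by rewrite mulrA.
pose Asub := [fset a in A | pop (a - w) && (3 * bd a <= d)].
have Acard : (#|` Asub|)%:R = \sum_(a <- A) ind (pop (a - w) && (3 * bd a <= d)).
  by rewrite card_sep.
have F9 : 3 * d <= 4 * (#|` Asub|)%:R.
  have h : d * d <= d * (#|` Asub|)%:R + 3 * bad w.
    rewrite {1}/d /deg Acard -F8 !mulr_sumr -big_split /=; apply: ler_sum => a _.
    rewrite /ind; case: (pop (a - w)) => /=; last by rewrite !mul0r mulr0 addr0.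
    rewrite mul1r mulr1; case: (boolP (3 * bd a <= d)) => h /=.
      by rewrite mulr1 lerDl mulr_ge0 ?ler0n.
    by rewrite mulr0 add0r ltW // ltNge.
  have hbad2 : 12 * bad w < d ^+ 2 by [].
  have h2 : d * (3 * d) <= d * (4 * (#|` Asub|)%:R) by rewrite expr2 in hbad2; lra.
  by rewrite ler_pM2l in h2.
have F10 : forall a b, a \in Asub -> b \in Asub ->
    d <= 3 * \sum_(c <- A) ind (pop (c - w)) * ind (m <= cod a c) * ind (m <= cod b c).
  move=> a b; rewrite !inE /= => /andP [aA /andP [pa ha]] /andP [bA /andP [pb hb]].
  have h : d <= \sum_(c <- A) ind (pop (c - w)) * ind (m <= cod a c) * ind (m <= cod b c) + bd a + bd b.
    rewrite /d /deg /bd -!big_split /=; apply: ler_sum => c _.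
    by rewrite /ind !ltNge; apply: ind_split.
  lra.
pose DA := diffset A.
pose DDA := diffset DA.
have uDD : uniq DDA := fset_uniq DDA.
pose R2 := fun z : G => \sum_(y1 <- DA) \sum_(y2 <- DA) r y1 * r y2 * ((y1 - y2 == z)%:R).
have R20 : forall z, 0 <= R2 z.
  by move=> z; apply: sumr_ge0 => y1 _; apply: sumr_ge0 => y2 _; rewrite !mulr_ge0 ?ler0n.
have R2z : forall t, t \notin DDA -> R2 t = 0.
  move=> t tn; rewrite /R2 big1_fset // => y1 y1D _; rewrite big1_fset // => y2 y2D _.
  by case: eqP => [e|]; [move: tn; rewrite -e in_diffset | rewrite mulr0].
pose Q := fun x : G => \sum_(z1 <- DDA) \sum_(z2 <- DDA) R2 z1 * R2 z2 * ((z1 - z2 == x)%:R).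
pose X := fun a c : G => \sum_(w' <- A) r (a - w') * r (c - w').
have X0 : forall a c, 0 <= X a c by move=> a c; apply: sumr_ge0 => *; rewrite mulr_ge0.
have codX : forall a c, tau ^+ 2 * cod a c <= X a c.
  move=> a c; rewrite /cod /X mulr_sumr; apply: ler_sum => w' _.
  have t1 : forall y, tau * ind (pop y) <= r y.
    by move=> y; rewrite /ind /pop; case: (boolP (tau <= r y)) => h /=; rewrite ?mulr1 ?mulr0 //; exact: r0.
  rewrite expr2 mulrACA.
  by apply: ler_pM; [rewrite mulr_ge0 // ltW | rewrite mulr_ge0 // ltW | exact: t1 | exact: t1].
have XR2 : forall a c, X a c <= R2 (a - c).
  move=> a c; exact: (@conv_le G A DA r r a c uA uD r0 r0 rz rz).
have F11 : forall a b, a \in Asub -> b \in Asub -> tau ^+ 4 * m ^+ 2 * d <= 3 * Q (a - b).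
  move=> a b aS bS; have h10 := F10 a b aS bS.
  apply: (le_trans (y := tau ^+ 4 * m ^+ 2 * (3 * \sum_(c <- A) ind (pop (c - w)) * ind (m <= cod a c) * ind (m <= cod b c)))).
    by apply: ler_wpM2l; first by rewrite mulr_ge0 // exprn_ge0 // ltW.
  rewrite mulrCA; apply: ler_wpM2l; first by apply: ler0n.
  apply: (le_trans (y := \sum_(c <- A) R2 (a - c) * R2 (b - c))); last first.
    exact: (@conv_le G A DDA R2 R2 a b uA uDD R20 R20 R2z R2z).
  rewrite mulr_sumr; apply: ler_sum => c _.
  apply: (le_trans (y := X a c * X b c)); last first.
    by apply: ler_pM; [exact: X0 | exact: X0 | exact: XR2 | exact: XR2].
  apply: (le_trans (y := (tau ^+ 2 * cod a c) * (tau ^+ 2 * cod b c))); last first.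
    have tau2 : 0 <= tau ^+ 2 by rewrite exprn_ge0 // ltW.
    by apply: ler_pM; [rewrite mulr_ge0 | rewrite mulr_ge0 | exact: codX | exact: codX].
  by apply: ptw; [exact: ltW | exact: m0 | exact: cod0 | exact: cod0].
have sumrDA : \sum_(y <- DA) r y = N ^+ 2.
  rewrite -NN -(@sum_diffset G A (fun _ => 1)); apply: eq_bigr => y _; by rewrite mulr1.
have sumR2 : \sum_(z <- DDA) R2 z <= N ^+ 4.
  rewrite /R2 exchange_big /=.
  apply: (le_trans (y := \sum_(y1 <- DA) \sum_(y2 <- DA) r y1 * r y2)); last first.
    under eq_bigr do rewrite -mulr_sumr sumrDA.
    by rewrite -mulr_suml sumrDA -exprD.
  apply: ler_sum => y1 _; rewrite exchange_big /=; apply: ler_sum => y2 _.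
  rewrite -mulr_sumr; rewrite -[X in _ <= X]mulr1; apply: ler_wpM2l; first by rewrite mulr_ge0.
  exact: sum_eq_le1.
have F12 : \sum_(x <- diffset Asub) Q x <= N ^+ 8.
  rewrite /Q exchange_big /=.
  apply: (le_trans (y := \sum_(z1 <- DDA) \sum_(z2 <- DDA) R2 z1 * R2 z2)); last first.
    under eq_bigr do rewrite -mulr_sumr.
    rewrite -mulr_suml -expr2.
    have -> : N ^+ 8 = (N ^+ 4) ^+ 2 by rewrite -exprM.
    by apply: lerX; [apply: sumr_ge0 => *; exact: R20 | exact: sumR2].
  apply: ler_sum => z1 _; rewrite exchange_big /=; apply: ler_sum => z2 _.
  rewrite -mulr_sumr; rewrite -[X in _ <= X]mulr1; apply: ler_wpM2l; first by rewrite mulr_ge0.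
  exact: sum_eq_le1 (fset_uniq _).
have H1 : (#|` diffset Asub|)%:R * (tau ^+ 4 * m ^+ 2 * d) <= 3 * N ^+ 8.
  rewrite card_fset_sum1 natr_sum mulr_suml.
  apply: (le_trans (y := \sum_(x <- diffset Asub) 3 * Q x)); last first.
    by rewrite -mulr_sumr; apply: ler_wpM2l; [apply: ler0n | exact: F12].
  apply: ler_sum_in => x xD; rewrite mulr1n mul1r.
  by case/diffsetP: xD => a aS [b bS ->]; apply: F11.
exists Asub; split; first exact: fset_sub.
have := @final_alg N E E3 D d _ _ N0 E0 E30 D0 d0 (ler0n _ _) F2 hbig F9 H1.
cbv zeta => -[g1 g2]; split; [exact: g1 | exact: g2].
Qed.
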